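(* Let $J,L\subseteq S$ with $n:=\#J\ge2$, $J\setminus\{j_1,j_n\}=L\setminus\{l_1\}$ and $j_1<l_1$. Then in $A$: $$\tau^-_J-\tau^-_Lt_{j_n}-\sum_{i=2}^{n-1}(-1)^i\tau^-_{(J\cup L)\setminus\{j_i\}}+(-1)^nt_{j_1}\tau^-_L=0.$$
   Context: $S$ is a finite set with a total order $<$, $R$ a commutative ring with $1$, $q\in R$, $A=R\langle t_s\mid s\in S\rangle$ the free associative algebra. Subsets are enumerated increasingly: $J=\{j_1<\dots<j_{\#J}\}$, $L=\{l_1<\dots\}$. $t_J=t_{j_1}\cdots t_{j_{\#J}}$; for $I=\{j_{\alpha_1}<\dots<j_{\alpha_{\#I}}\}\subseteq J$, $\ell_J(I)=\sum_\nu(\alpha_\nu-\nu)$; $\tau^-_J=\sum_{I\subseteq J,\ \#I\text{ odd}}(-1)^{\ell_J(I)}(-q)^{(\#I-1)/2}t_{J\setminus I}$. *)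

(* Defs.v *)
From HB Require Import structures.
From mathcomp Require Import all_boot all_order all_algebra.
Set Implicit Arguments. Unset Strict Implicit. Unset Printing Implicit Defensive.
Import Order.TTheory GRing.Theory.
Local Open Scope ring_scope.

(* The free associative algebra A = R<t_s | s in S>.                       *)
(* An element is represented by a formal R-linear combination of words    *)
(* (a list of pairs (coefficient, word)); words in the alphabet S are the  *)
(* monomials t_{s1} ... t_{sk}.  Two representations denote the same      *)
(* element of A iff they have the same coefficient on every word, see      *)
(* [fa_coef] / [fa_eq].  Multiplication is concatenation of words.         *)

Section FreeAlg.
Variables (R : comPzRingType) (S : eqType).

Definition fa := seq (R * seq S).

Definition fa_coef (x : fa) (w : seq S) : R := \sum_(p <- x | p.2 == w) p.1.

Definition fa_eq (x y : fa) : Prop := forall w, fa_coef x w = fa_coef y w.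

Definition fa_zero : fa := [::].
Definition fa_add (x y : fa) : fa := x ++ y.
Definition fa_scale (c : R) (x : fa) : fa := [seq (c * p.1, p.2) | p <- x].
Definition fa_opp (x : fa) : fa := fa_scale (-1) x.
Definition fa_sub (x y : fa) : fa := fa_add x (fa_opp y).
Definition fa_mul (x y : fa) : fa :=
  [seq (p.1 * p'.1, p.2 ++ p'.2) | p <- x, p' <- y].
Definition fa_word (w : seq S) : fa := [:: (1, w)].
Definition fa_sum (xs : seq fa) : fa := flatten xs.
End FreeAlg.

Section Subsets.
Variables (d : Order.disp_t) (S : finOrderType d).

(* increasing enumeration j_1 < ... < j_{#J} (0-based list) *)
Definition senum (J : {set S}) : seq S := sort (fun x y : S => (x <= y)%O) (fintype.enum J).

Definition tword (J : {set S}) : seq S := senum J.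

(* l_J(I) = sum_nu (alpha_nu - nu), where I = {j_{alpha_1} < ... }:
   for the nu-th element i of I, alpha_nu - nu = (index of i in J) - (index of i in I) *)
Definition ellJ (J I : {set S}) : nat :=
  \sum_(i in I) (index i (senum J) - index i (senum I))%N.

Variable (R : comPzRingType).

Definition tau_minus (q : R) (J : {set S}) : fa R S :=
  [seq ((-1) ^+ ellJ J K * (- q) ^+ (#|K|.-1)./2, tword (J :\: K))
  | K : {set S} <- [seq K : {set S} <- fintype.enum (powerset J) | odd #|K|]].

End Subsets.

(* Main.v *)
Require Import Defs.
From HB Require Import structures.
From mathcomp Require Import all_boot all_order all_algebra ring.
Set Implicit Arguments. Unset Strict Implicit. Unset Printing Implicit Defensive.
Import Order.TTheory GRing.Theory.
Local Open Scope ring_scope.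

Section Alg.
Variables (R : comPzRingType) (S : eqType) (q : R).
Implicit Types (s X : seq S) (w : seq S) (f g : seq S -> R).

Definition lft (x : S) f w : R := (ohead w == Some x)%:R * f (behead w).
Definition rgt (c : S) f w : R :=
  (ohead (rev w) == Some c)%:R * f (rev (behead (rev w))).

Fixpoint tt s (b : bool) w : R :=
  match s with
  | [::] => if b then 0 else (w == [::])%:R
  | x :: s' => if b then tt s' false w - lft x (tt s' true) w
               else lft x (tt s' false) w - q * tt s' true w
  end.

Fixpoint del (k : nat) s : seq S :=
  match s, k with
  | [::], _ => [::]
  | x :: s', 0%N => s'
  | x :: s', k'.+1 => x :: del k' s'
  end.

Lemma size_del k s : (k < size s)%N -> size (del k s) = (size s).-1.
Proof.
elim: s k => [|x s IH] [|k] //= H.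
by rewrite IH // ; case: s IH H => //.
Qed.

Lemma Delta X : forall w,
  \sum_(k < size X) (-1)^+k * tt (del k X) true w = 0 /\
  \sum_(k < size X) (-1)^+k * tt (del k X) false w = tt X true w.
Proof.
elim: X => [|x X IH] w; first by rewrite !big_ord0.
rewrite !big_ord_recl !expr0 !mul1r.
have E : forall b, \sum_(i < size X) (-1) ^+ (@lift (size X).+1 ord0 i) * tt (del (@lift (size X).+1 ord0 i) (x :: X)) b w
   = - \sum_(i < size X) (-1) ^+ i * tt (x :: del i X) b w.
  move=> b; rewrite -sumrN; apply: eq_bigr => i _.
  by rewrite lift0 exprS mulN1r mulNr.
rewrite !E /=.
have [H1 H2] := IH w; have [H3 H4] := IH (behead w).
split.
- have -> : \sum_(i < size X) (-1) ^+ i * (tt (del i X) false w - lft x (tt (del i X) true) w)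
     = \sum_(i < size X) (-1) ^+ i * tt (del i X) false w
       - (ohead w == Some x)%:R * \sum_(i < size X) (-1) ^+ i * tt (del i X) true (behead w).
    rewrite mulr_sumr -sumrB; apply: eq_bigr => i _; rewrite /lft; ring.
  by rewrite H2 H3 mulr0 subr0 subrr.
- have -> : \sum_(i < size X) (-1) ^+ i * (lft x (tt (del i X) false) w - q * tt (del i X) true w)
     = (ohead w == Some x)%:R * \sum_(i < size X) (-1) ^+ i * tt (del i X) false (behead w)
       - q * \sum_(i < size X) (-1) ^+ i * tt (del i X) true w.
    rewrite !mulr_sumr -sumrB; apply: eq_bigr => i _; rewrite /lft; ring.
  by rewrite H4 H1 mulr0 subr0.
Qed.

Lemma lft_rgt x c f w : lft x (rgt c f) w = rgt c (lft x f) w.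
Proof.
rewrite /lft /rgt; case: w => [|z v] /=; first by rewrite !mul0r.
case/lastP: v => [|u y] /=; first by rewrite !mul0r !mulr0.
rewrite rev_rcons /= rev_cons rev_rcons /= revK rev_rcons /= revK.
by rewrite mulrCA.
Qed.

Lemma tt_rcons s c : forall w,
  tt (rcons s c) true w = rgt c (tt s true) w + (-1)^+size s * tt s false w /\
  tt (rcons s c) false w = rgt c (tt s false) w + (-1)^+size s * q * tt s true w.
Proof.
elim: s => [|x s IH] w.
  rewrite /= /lft /rgt /= !expr0 !mul1r; split; first by rewrite !mulr0 subr0 add0r.
  rewrite !mulr0 subr0 addr0.
  case: w => [|z v] /=; first by rewrite !mul0r.
  case/lastP: v => [|v t] /=; first by [].
  rewrite rev_cons rev_rcons /= rev_rcons /=.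
  have -> : (rcons v t == [::]) = false by case: v.
  by rewrite !mulr0.
have [A1 A2] := IH w; have [B1 B2] := IH (behead w).
have L1 : forall b, lft x (tt (rcons s c) b) w = lft x (rgt c (tt s b)) w
  + (-1)^+size s * (if b then 1 else q) * lft x (tt s (~~ b)) w.
  by case; rewrite /lft ?B1 ?B2 /=; ring.
have L2 : forall b, rgt c (tt (x :: s) b) w = (if b then rgt c (tt s false) w - rgt c (lft x (tt s true)) w
   else rgt c (lft x (tt s false)) w - q * rgt c (tt s true) w).
  by case; rewrite /rgt /=; ring.
rewrite L2 L2 rcons_cons.
have T1 : forall y s' w', tt (y :: s') true w' = tt s' false w' - lft y (tt s' true) w' by [].
have T2 : forall y s' w', tt (y :: s') false w' = lft y (tt s' false) w' - q * tt s' true w' by [].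
rewrite T1 T2 T1 T2 L1 L1 /= A1 A2 !lft_rgt exprS; split; ring.
Qed.

Lemma tt_consT y s w : tt (y :: s) true w = tt s false w - lft y (tt s true) w.
Proof. by []. Qed.
Lemma tt_consF y s w : tt (y :: s) false w = lft y (tt s false) w - q * tt s true w.
Proof. by []. Qed.

Lemma sumABT a b X v :
  \sum_(k < size X) (-1)^+k * tt (a :: b :: del k X) true v =
  (ohead v == Some b)%:R * \sum_(k < size X) (-1)^+k * tt (del k X) false (behead v)
  - q * \sum_(k < size X) (-1)^+k * tt (del k X) true v
  - (ohead v == Some a)%:R * \sum_(k < size X) (-1)^+k * tt (del k X) false (behead v)
  + (ohead v == Some a)%:R * (ohead (behead v) == Some b)%:R *
      \sum_(k < size X) (-1)^+k * tt (del k X) true (behead (behead v)).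
Proof.
rewrite !mulr_sumr -!sumrB -big_split; apply: eq_bigr => k _.
rewrite /= /lft /= /lft; ring.
Qed.

Lemma sumABF a b X v :
  \sum_(k < size X) (-1)^+k * tt (a :: b :: del k X) false v =
  (ohead v == Some a)%:R * (ohead (behead v) == Some b)%:R *
      \sum_(k < size X) (-1)^+k * tt (del k X) false (behead (behead v))
  - (ohead v == Some a)%:R * q * \sum_(k < size X) (-1)^+k * tt (del k X) true (behead v)
  - q * \sum_(k < size X) (-1)^+k * tt (del k X) false v
  + q * (ohead v == Some b)%:R * \sum_(k < size X) (-1)^+k * tt (del k X) true (behead v).
Proof.
rewrite !mulr_sumr -!sumrB -big_split; apply: eq_bigr => k _.
rewrite /= /lft /= /lft; ring.
Qed.

Lemma mainalg a b c X w :
  tt (a :: rcons X c) true w - rgt c (tt (b :: X) true) w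
  - \sum_(k < size X) (-1)^+k * tt (a :: b :: rcons (del k X) c) true w
  + (-1)^+size X * lft a (tt (b :: X) true) w = 0.
Proof.
have E : \sum_(k < size X) (-1)^+k * tt (a :: b :: rcons (del k X) c) true w =
   (ohead (rev w) == Some c)%:R * \sum_(k < size X) (-1)^+k * tt (a :: b :: del k X) true (rev (behead (rev w)))
   - (-1)^+size X * \sum_(k < size X) (-1)^+k * tt (a :: b :: del k X) false w.
  rewrite !mulr_sumr -sumrB; apply: eq_bigr => k Hk.
  rewrite -!rcons_cons (tt_rcons _ _ _).1 /rgt /= size_del //.
  rewrite (_ : ((size X).-1.+2 = (size X).+1)%N); last by case: (size X) k Hk => [[]|].
  rewrite exprS; ring.
rewrite E -rcons_cons (tt_rcons _ _ _).1 /rgt sumABT sumABF /=.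
set v := rev (behead (rev w)).
have [H1 H2] := Delta X v; have [H3 H4] := Delta X (behead v);
have [H5 H6] := Delta X (behead (behead v)); have [H7 H8] := Delta X w;
have [H9 H10] := Delta X (behead w); have [H11 H12] := Delta X (behead (behead w)).
rewrite ?H1 ?H2 ?H3 ?H4 ?H5 ?H6 ?H7 ?H8 ?H9 ?H10 ?H11 ?H12 /lft /= /lft exprS; ring.
Qed.
End Alg.

Section Del.
Variables (T : eqType) (x0 : T).

Lemma mem_del (s : seq T) k v : uniq s -> (k < size s)%N ->
  (v \in del k s) = (v != nth x0 s k) && (v \in s).
Proof.
elim: s k => [|y s IH] [|k] //= /andP[ys us] Hk.
  rewrite in_cons; have [->|nvy] := eqVneq v y; first by rewrite (negbTE ys).
  by [].
rewrite !in_cons IH //; have [->|nvy] := eqVneq v y; rewrite /= ?andbT //.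
apply/esym; apply: contraNneq ys => ->; exact: mem_nth.
Qed.

Lemma subseq_del (s : seq T) k : subseq (del k s) s.
Proof.
elim: s k => [|y s IH] [|k] //=; first exact: subseq_cons.
by rewrite eqxx.
Qed.

Lemma size_del' (s : seq T) k : (k < size s)%N -> size (del k s) = (size s).-1.
Proof. exact: size_del. Qed.
End Del.

Section B.
Variables (d : Order.disp_t) (S : finOrderType d).

Lemma senum_sorted (J : {set S}) : sorted <%O (senum J).
Proof.
rewrite lt_sorted_uniq_le sort_uniq enum_uniq /=.
exact: (sort_sorted (@le_total _ S)).
Qed.

Lemma mem_senum (J : {set S}) x : (x \in senum J) = (x \in J).
Proof. by rewrite mem_sort mem_enum. Qed.

Lemma size_senum (J : {set S}) : size (senum J) = #|J|.
Proof. by rewrite size_sort cardE. Qed.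

Lemma senum_eq (J : {set S}) s : sorted <%O s -> s =i J -> senum J = s.
Proof.
move=> Hs Hm; apply: (irr_sorted_eq (@lt_trans _ S) (@ltxx _ S)) => //.
  exact: senum_sorted.
by move=> y; rewrite mem_senum Hm.
Qed.

Lemma index_filter_le (P : pred S) (s : seq S) i : P i ->
  (index i (filter P s) <= index i s)%N.
Proof.
move=> Pi; elim: s => [|y s IH] //=.
have [->|ne] := eqVneq y i; first by rewrite Pi /= eqxx.
by case: (P y) => /=; [rewrite ifN // ltnS | exact: leqW].
Qed.

Lemma senum_sub (K J : {set S}) : K \subset J ->
  senum K = [seq y <- senum J | y \in K].
Proof.
move=> sKJ; apply: senum_eq; first exact/lt_sorted_filter/senum_sorted.
move=> y; rewrite mem_filter mem_senum andbC.
by case Hy: (y \in K); rewrite ?andbF // (subsetP sKJ).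
Qed.

Lemma index_sub_le (K J : {set S}) i : K \subset J -> i \in K ->
  (index i (senum K) <= index i (senum J))%N.
Proof. by move=> sKJ iK; rewrite (senum_sub sKJ); apply: index_filter_le. Qed.


Lemma subU1_notin (x : S) (K J' : {set S}) : x \notin K ->
  (K \subset x |: J') = (K \subset J').
Proof.
move=> xK; apply/subsetP/subsetP => H y yK.
  have := H y yK; rewrite in_setU1; case/orP => // /eqP Eyx.
  by rewrite -Eyx yK in xK.
by rewrite in_setU1 H ?orbT.
Qed.

Variable (R : comPzRingType).

Lemma sum_split (x : S) (J' : {set S}) (P : pred {set S}) (F : {set S} -> R) :
  x \notin J' ->
  \sum_(K : {set S} | (K \subset x |: J') && P K) F K =
  \sum_(K : {set S} | (K \subset J') && P K) F K + \sum_(K : {set S} | (K \subset J') && P (x |: K)) F (x |: K).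
Proof.
move=> xJ; rewrite (bigID (fun K : {set S} => x \in K)) /= addrC; congr (_ + _).
  apply: eq_bigl => K; case xK: (x \in K); rewrite /= ?andbF ?andbT.
    by apply/esym; apply/negbTE; apply: contraNN xJ => /andP[/subsetP H _]; exact: H.
  by rewrite subU1_notin ?xK.
rewrite (reindex_onto (fun K : {set S} => x |: K) (fun K : {set S} => K :\ x)) /=.
  apply: eq_bigl => K; rewrite setU11 andbT.
  case xK: (x \in K).
    rewrite (_ : ((x |: K) :\ x == K) = false) ?andbF.
      apply/esym/negbTE; apply: contraNN xJ => /andP[/subsetP H _]; exact: H.
    apply/negbTE/negP => /eqP E; have := setD11 x (x |: K).
    by rewrite E xK.
  by rewrite setU1K ?xK // eqxx andbT subUset sub1set setU11 /= subU1_notin ?xK.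
by move=> K /andP[_ xK]; rewrite setD1K.
Qed.

Definition Cf (q : R) (b : bool) (J : {set S}) (w : seq S) : R :=
  \sum_(K : {set S} | (K \subset J) && (odd #|K| == b))
     (tword (J :\: K) == w)%:R * ((-1)^+ellJ J K * (-q)^+(#|K|./2)).

Lemma half_odd n : odd n -> (n.-1)./2 = n./2.
Proof. by case: n => //= n; rewrite uphalf_half => /negbTE ->. Qed.

Lemma coef_tau q (J : {set S}) w : fa_coef (tau_minus q J) w = Cf q true J w.
Proof.
rewrite /fa_coef /tau_minus big_map big_filter_cond big_enum_cond /Cf.
rewrite big_mkcond [RHS]big_mkcond; apply: eq_bigr => K _ /=.
rewrite powersetE eqb_id; case: (K \subset J) => //=; case Ho: (odd #|K|) => //=.
by case: eqP => _; rewrite ?mul1r ?mul0r // half_odd.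
Qed.

Lemma senum_U1 x (A : {set S}) : (forall y, y \in A -> (x < y)%O) ->
  senum (x |: A) = x :: senum A.
Proof.
move=> H; apply: senum_eq.
  rewrite /= path_sortedE; last exact: lt_trans.
  by rewrite senum_sorted andbT; apply/allP => y; rewrite mem_senum; apply: H.
by move=> y; rewrite in_cons in_setU1 mem_senum.
Qed.

Lemma ind_cons (x : S) u w : ((x :: u) == w)%:R = (ohead w == Some x)%:R * (u == behead w)%:R :> R.
Proof.
case: w => [|z v] /=; first by rewrite mul0r.
rewrite eqseq_cons (_ : (Some z == Some x) = (x == z)); last first.
  by apply/eqP/eqP => [[->]|->].
by case: (x == z); case: (u == v); rewrite /= ?mul1r ?mul0r.
Qed.

Lemma Cf_tt q s : forall (J : {set S}), senum J = s -> forall w,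
  Cf q false J w = tt q s false w /\ Cf q true J w = tt q s true w.
Proof.
elim: s => [|x s IH] J HJ w.
  have J0 : J = set0 by apply/eqP; rewrite -cards_eq0 -size_senum HJ.
  subst J.
  have E : forall b, Cf q b set0 w = (odd 0 == b)%:R * ([::] == w)%:R.
    move=> b; rewrite /Cf big_mkcond (bigD1 set0) //= big1 => [|K /negbTE H].
      rewrite sub0set setDv /tword HJ /ellJ big_set0 cards0 expr0 !mulr1 addr0.
      by case: b => /=; rewrite ?mul0r ?mul1r.
    by rewrite subset0 H.
  by rewrite !E /= eq_sym mul0r mul1r.
have xJ : x \in J by rewrite -mem_senum HJ mem_head.
have Hs : sorted <%O (x :: s) by rewrite -HJ senum_sorted.
have allx : all (fun y => x < y)%O s := order_path_min (@lt_trans _ S) Hs.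
have HJ' : senum (J :\ x) = s.
  apply: senum_eq; first exact: path_sorted Hs.
  move=> y; rewrite in_setD1 -mem_senum HJ in_cons.
  have [->|ne] := eqVneq y x; rewrite /= ?(negbTE ne) //.
  by apply/negbTE/negP => /(allP allx); rewrite ltxx.
move: (IH _ HJ') => IH'.
set J' := J :\ x in HJ' IH'.
have xJ' : x \notin J' by rewrite setD11.
have Jdef : x |: J' = J by rewrite setD1K.
have gtx : forall y, y \in J' -> (x < y)%O by move=> y; rewrite -mem_senum HJ' => /(allP allx).
have P1 : forall b, \sum_(K : {set S} | (K \subset J') && (odd #|K| == b))
    (tword (J :\: K) == w)%:R * ((-1)^+ellJ J K * (-q)^+(#|K|./2))
   = (if b then -1 else 1) * lft x (Cf q b J') w.
  move=> b; rewrite /lft /Cf !mulr_sumr; apply: eq_bigr => K /andP[sK /eqP Ho].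
  have xK : x \notin K by apply: contraNN xJ' => /(subsetP sK).
  have -> : J :\: K = x |: (J' :\: K).
    apply/setP => y; rewrite -Jdef !inE.
    by case: (eqVneq y x) => [->|ne] /=; rewrite ?xK.
  rewrite /tword senum_U1; last by move=> y /setDP[/gtx].
  rewrite ind_cons.
  have -> : ellJ J K = (ellJ J' K + #|K|)%N.
    rewrite /ellJ -sum1_card -big_split /=; apply: eq_bigr => i iK.
    have iJ' : i \in J' := subsetP sK i iK.
    rewrite HJ -HJ' /= ifN; last by apply: contraNneq xJ' => ->.
    by rewrite subSn ?addn1 // index_sub_le.
  rewrite exprD -[(-1)^+#|K|]signr_odd Ho; case: b {Ho} => /=; ring.
have P2 : forall b, \sum_(K : {set S} | (K \subset J') && (odd #|x |: K| == b))
    (tword (J :\: (x |: K)) == w)%:R * ((-1)^+ellJ J (x |: K) * (-q)^+(#|x |: K|./2))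
   = if b then Cf q false J' w else - q * Cf q true J' w.
  have cK : forall K : {set S}, K \subset J' -> #|x |: K| = #|K|.+1.
    move=> K sK; rewrite cardsU1 (_ : (x \notin K) = true) //.
    by apply: contraNN xJ' => /(subsetP sK).
  move=> b; rewrite (eq_bigl (fun K : {set S} => (K \subset J') && (odd #|K| == ~~ b))); last first.
    move=> K; case sK: (K \subset J') => //=; rewrite cK //=.
    by case: b; case: (odd #|K|).
  have T : forall K : {set S}, K \subset J' ->
     (tword (J :\: (x |: K)) == w)%:R * ((-1)^+ellJ J (x |: K) * (-q)^+(#|x |: K|./2))
     = (tword (J' :\: K) == w)%:R * ((-1)^+ellJ J' K * (-q)^+(#|K|.+1./2)) :> R.
    move=> K sK; have xK : x \notin K by apply: contraNN xJ' => /(subsetP sK).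
    have -> : J :\: (x |: K) = J' :\: K.
      apply/setP => y; rewrite -Jdef !inE.
      by case: (eqVneq y x) => [->|ne] /=; rewrite ?xK ?andbF.
    rewrite cK //; congr (_ * (_ ^+ _ * _)).
    rewrite /ellJ big_setU1 //= senum_U1; last by move=> y /(subsetP sK) /gtx.
    rewrite HJ -HJ' /= eqxx sub0n add0n; apply: eq_bigr => i iK.
    have xi : (x == i) = false by apply/negbTE; apply: contraNneq xK => ->.
    by rewrite xi subSS.
  case: b.
    rewrite /Cf; apply: eq_bigr => K /andP[sK /eqP Ho]; rewrite T //=.
    by rewrite uphalf_half Ho add0n.
  rewrite /Cf mulr_sumr; apply: eq_bigr => K /andP[sK /eqP Ho]; rewrite T //=.
  rewrite uphalf_half Ho add1n exprS; ring.
have SP : forall b, Cf q b J w =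
   \sum_(K : {set S} | (K \subset J') && (odd #|K| == b))
    (tword (J :\: K) == w)%:R * ((-1)^+ellJ J K * (-q)^+(#|K|./2))
  + \sum_(K : {set S} | (K \subset J') && (odd #|x |: K| == b))
    (tword (J :\: (x |: K)) == w)%:R * ((-1)^+ellJ J (x |: K) * (-q)^+(#|x |: K|./2)).
  by move=> b; rewrite /Cf -{1}Jdef sum_split.
rewrite !SP (P1 false) (P1 true) (P2 false) (P2 true) /= /lft.
have [A1 A2] := IH' (behead w); have [A3 A4] := IH' w.
rewrite A1 A2 A3 A4; split; ring.
Qed.

Lemma senum_behead (A : {set S}) x t : senum A = x :: t -> senum (A :\ x) = t.
Proof.
move=> HA; have Hs : sorted <%O (x :: t) by rewrite -HA senum_sorted.
have allx : all (fun y => x < y)%O t := order_path_min (@lt_trans _ S) Hs.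
apply: senum_eq; first exact: path_sorted Hs.
move=> y; rewrite in_setD1 -mem_senum HA in_cons.
have [->|ne] := eqVneq y x; rewrite /= ?(negbTE ne) //.
by apply/negbTE/negP => /(allP allx); rewrite ltxx.
Qed.

Lemma senum_mid (J : {set S}) y u z : senum J = y :: rcons u z ->
  senum (J :\: [set y; z]) = u.
Proof.
move=> HJ; have Hs : sorted <%O (y :: rcons u z) by rewrite -HJ senum_sorted.
have Hu : uniq (y :: rcons u z) := lt_sorted_uniq Hs.
apply: senum_eq.
  have := path_sorted Hs; rewrite -cats1 => /(subseq_sorted (@lt_trans _ S)); apply.
  exact: prefix_subseq.
move=> v; rewrite in_setD -[v \in J]mem_senum HJ !inE mem_rcons !inE.
move: Hu; rewrite /= mem_rcons !inE rcons_uniq negb_or => /andP[/andP[yz yu] /andP[zu _]].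
have [->|nvy] := eqVneq v y; first by rewrite (negbTE yu).
rewrite /=; have [->|nvz] := eqVneq v z; first by rewrite (negbTE zu).
by [].
Qed.


Lemma senum_del (J L : {set S}) x0 y b u z k :
  senum J = y :: rcons u z -> senum L = b :: u -> (y < b)%O -> (k < size u)%N ->
  senum ((J :|: L) :\ nth x0 u k) = y :: b :: rcons (del k u) z.
Proof.
move=> HJ HL yb Hk.
have sJ : sorted <%O (y :: rcons u z) by rewrite -HJ senum_sorted.
have sL : sorted <%O (b :: u) by rewrite -HL senum_sorted.
have sM : sorted <%O (y :: b :: rcons u z).
  rewrite /= yb /= rcons_path; move: sJ sL; rewrite /= rcons_path => /andP[_ H] -> /=.
  by destruct u; [rewrite ltn0 in Hk | exact H].
have uM := lt_sorted_uniq sM.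
apply: senum_eq.
  apply: (subseq_sorted (@lt_trans _ S) _ sM); rewrite /= !eqxx -!cats1.
  by apply: cat_subseq; [apply: subseq_del | apply: subseq_refl].
move: uM; rewrite /= !in_cons !mem_rcons !in_cons rcons_uniq negb_or.
move=> /andP[/andP[yb' /norP[yz yu]] /andP[/norP[bz bu] /andP[zu uu]]].
have ukin : nth x0 u k \in u := mem_nth x0 Hk.
move=> v; rewrite in_setD1 in_setU -[v \in J]mem_senum -[v \in L]mem_senum HJ HL.
rewrite !in_cons !mem_rcons !in_cons (mem_del x0 _ uu Hk).
have [->|ne] := eqVneq v (nth x0 u k).
  rewrite /=.
  have -> : (nth x0 u k == y) = false by apply/negbTE; apply: contraNneq yu => <-.
  have -> : (nth x0 u k == b) = false by apply/negbTE; apply: contraNneq bu => <-.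
  have -> : (nth x0 u k == z) = false by apply/negbTE; apply: contraNneq zu => <-.
  by [].
rewrite /=; case: (v == y); case: (v == b); case: (v == z); case: (v \in u) => //.
Qed.
End B.




Section Coef.
Variables (R : comPzRingType) (S : eqType).
Implicit Types (x : fa R S).

Lemma coef_cat x y w : fa_coef (x ++ y) w = fa_coef x w + fa_coef y w.
Proof. by rewrite /fa_coef big_cat. Qed.
Lemma coef_scale c x w : fa_coef (fa_scale c x) w = c * fa_coef x w.
Proof. by rewrite /fa_coef big_map mulr_sumr. Qed.
Lemma coef_opp x w : fa_coef (fa_opp x) w = - fa_coef x w.
Proof. by rewrite coef_scale mulN1r. Qed.
Lemma coef_sum (xs : seq (fa R S)) w : fa_coef (fa_sum xs) w = \sum_(x <- xs) fa_coef x w.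
Proof. by rewrite /fa_coef big_flatten. Qed.
Lemma coef_zero w : fa_coef (fa_zero R S) w = 0.
Proof. by rewrite /fa_coef big_nil. Qed.

Lemma coef_mull a x w : fa_coef (fa_mul (fa_word R [:: a]) x) w = lft a (fa_coef x) w.
Proof.
rewrite /fa_mul /fa_word /= cats0 /fa_coef big_map /lft mulr_sumr big_mkcond [RHS]big_mkcond.
apply: eq_bigr => p _ /=; case: w => [|z v] /=; first by case: ifP; rewrite ?mul0r.
rewrite eqseq_cons (_ : (Some z == Some a) = (a == z)); last by apply/eqP/eqP => [[->]|->].
by case: (a == z); case: (p.2 == v); rewrite /= ?mul1r ?mul0r.
Qed.

Lemma coef_mulr c x w : fa_coef (fa_mul x (fa_word R [:: c])) w = rgt c (fa_coef x) w.
Proof.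
have -> : fa_mul x (fa_word R [:: c]) = [seq (p.1 * 1, p.2 ++ [:: c]) | p <- x].
  by rewrite /fa_mul; elim: x => //= p x ->.
rewrite /fa_coef big_map /rgt mulr_sumr big_mkcond [RHS]big_mkcond.
apply: eq_bigr => p _ /=; case/lastP: w => [|u y] /=.
  by rewrite mul0r; case: (p.2).
rewrite rev_rcons /= revK cats1 eqseq_rcons (_ : (Some y == Some c) = (c == y)); last by apply/eqP/eqP => [[->]|->].
by case: (c == y); case: (p.2 == u); rewrite /= ?mul1r ?mul0r ?mulr1 ?andbF.
Qed.
End Coef.

Lemma coef_tt (d : Order.disp_t) (S : finOrderType d) (R : comPzRingType) (q : R)
  (K : {set S}) w : fa_coef (tau_minus q K) w = tt q (senum K) true w.
Proof. by rewrite coef_tau; have [_ ->] := Cf_tt q (erefl (senum K)) w. Qed.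

Theorem lemma3p3 (d : Order.disp_t) (S : finOrderType d) (R : comPzRingType)
  (q : R) (J L : {set S}) (x0 : S) :
  let n := #|J| in
  let j := fun i : nat => nth x0 (senum J) i.-1 in
  let l1 := nth x0 (senum L) 0 in
  (2 <= n)%N ->
  L != set0 ->
  J :\: [set j 1%N; j n] = L :\ l1 ->
  (j 1%N < l1)%O ->
  fa_eq
    (fa_sum
      [:: tau_minus q J;
          fa_opp (fa_mul (tau_minus q L) (fa_word R [:: j n]));
          fa_opp (fa_sum [seq fa_scale ((-1) ^+ i) (tau_minus q ((J :|: L) :\ j i))
                         | i <- iota 2 (n - 2)]);
          fa_scale ((-1) ^+ n) (fa_mul (fa_word R [:: j 1%N]) (tau_minus q L))])
    (fa_zero R S).
Proof.
move=> n j l1 H2 HL0 HJL Hlt w.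
have [y [u [z HJ]]] : exists y u z, senum J = y :: rcons u z.
  move: H2; rewrite /n -size_senum.
  case: (senum J) => [|y s] //; case/lastP: s => [|u z] // _.
  by exists y, u, z.
have Hn : n = (size u).+2 by rewrite /n -size_senum HJ /= size_rcons.
have ja : j 1%N = y by rewrite /j HJ.
have jc : j n = z by rewrite /j HJ Hn /= nth_rcons ltnn eqxx.
have jk : forall k, (k < size u)%N -> j (k.+2) = nth x0 u k.
  by move=> k Hk; rewrite /j HJ /= nth_rcons Hk.
have [b HL] : exists b, senum L = b :: u.
  case EL: (senum L) => [|b t].
    move: HL0; rewrite -cards_eq0 -size_senum EL //.
  exists b; congr (_ :: _).
  have l1b : l1 = b by rewrite /l1 EL.
  by rewrite -(senum_behead EL) -l1b -HJL ja jc (senum_mid HJ).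
have l1b : l1 = b by rewrite /l1 HL.
rewrite coef_zero coef_sum !big_cons big_nil addr0 coef_opp coef_mulr coef_opp coef_sum.
rewrite big_map coef_scale coef_mull coef_tt HJ jc ja.
have -> : rgt z (fa_coef (tau_minus q L)) w = rgt z (tt q (b :: u) true) w.
  by rewrite /rgt coef_tt HL.
have -> : lft y (fa_coef (tau_minus q L)) w = lft y (tt q (b :: u) true) w.
  by rewrite /lft coef_tt HL.
have -> : \sum_(i <- iota 2 (n - 2))
       fa_coef (fa_scale ((-1) ^+ i) (tau_minus q ((J :|: L) :\ j i))) w
   = \sum_(k < size u) (-1)^+k * tt q (y :: b :: rcons (del k u) z) true w.
  rewrite Hn (_ : ((size u).+2 - 2 = size u)%N); last by rewrite subSS subSS subn0.
  rewrite (_ : iota 2 (size u) = map (addn 2) (index_iota 0 (size u))); last first.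
    by rewrite /index_iota subn0 -iotaDl addn0.
  rewrite big_map big_mkord; apply: eq_bigr => k _.
  rewrite coef_scale coef_tt add2n jk // (senum_del x0 HJ HL) //; last by rewrite -ja -l1b.
  by rewrite !exprS !mulN1r opprK.
rewrite Hn !exprS !mulN1r opprK.
by rewrite !addrA; exact: mainalg.
Qed.
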